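(* Let $G$ be a simple graph with $\mathcal{H}$-eigenvalues $\lambda_1\ge\lambda_2\ge\cdots\ge\lambda_m$. If $G$ contains a clique $K_t$ (with $t\ge 2$), then $\lambda_{\binom{t}{2}}\ge t$. In particular, if the clique number of $G$ is $\omega$, then $\lambda_{\binom{\omega}{2}}\ge\omega$.
   Context: Graphs are simple with at least one edge. For an oriented edge $e$ write $e^-$ for its tail and $e^+$ for its head. For distinct edges $e,e'$: $e\leftrightarrow e'$ means $e^+=e'^-$ or $e'^+=e^-$; $e\overset{\pm}{\sim}e'$ means $e^+=e'^+$ or $e^-=e'^-$; $e\vartriangle e'$ means $e,e'$ are two edges of a common triangle. $\triangle(e)$ is the number of triangles containing $e$. The Helmholtzian matrix $\mathcal{H}(G)=(h_{ee'})$ is indexed by edges, with $h_{ee}=\triangle(e)+2$, and for $e\ne e'$: $h_{ee'}=-1$ if $e\leftrightarrow e'$ and not $e\vartriangle e'$; $h_{ee'}=1$ if $e\overset{\pm}{\sim}e'$ and not $e\vartriangle e'$; $h_{ee'}=0$ otherwise. The $\mathcal{H}$-eigenvalues of $G$ are the eigenvalues of $\mathcal{H}(G)$ for an arbitrary edge orientation (independent of the orientation), listed in non-increasing order. *)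

(* Defs.v *)
From HB Require Import structures.
From mathcomp Require Import all_boot all_order all_algebra.
From mathcomp Require Import polyrcf.
Set Implicit Arguments. Unset Strict Implicit. Unset Printing Implicit Defensive.
Import Order.TTheory GRing.Theory Num.Theory.
Local Open Scope ring_scope.

Definition simple_graph (V : finType) (adj : rel V) : Prop :=
  (forall x y, adj x y = adj y x) /\ (forall x, ~~ adj x x).

Definition has_edge (V : finType) (adj : rel V) : Prop := exists x y, adj x y.

Definition orientation (V : finType) (adj : rel V) (E : {set V * V}) : Prop :=
  (forall e, e \in E -> adj e.1 e.2) /\
  (forall x y, adj x y -> ((x, y) \in E) (+) ((y, x) \in E)).

Definition tail (V : finType) (e : V * V) := e.1.
Definition head (V : finType) (e : V * V) := e.2.

Definition arrow_rel (V : finType) (e e' : V * V) : bool :=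
  (head e == tail e') || (head e' == tail e).
Definition pm_rel (V : finType) (e e' : V * V) : bool :=
  (head e == head e') || (tail e == tail e').

Definition is_triangle (V : finType) (adj : rel V) (T : {set V}) : bool :=
  (#|T| == 3)%N && [forall x in T, forall y in T, (x != y) ==> adj x y].

Definition ends (V : finType) (e : V * V) : {set V} := [set e.1; e.2].

Definition tri_rel (V : finType) (adj : rel V) (e e' : V * V) : bool :=
  [exists T : {set V}, [&& is_triangle adj T, ends e \subset T & ends e' \subset T]].

Definition ntri (V : finType) (adj : rel V) (e : V * V) : nat :=
  #|[set T : {set V} | is_triangle adj T && (ends e \subset T)]|.

Definition h_entry (R : pzRingType) (V : finType) (adj : rel V) (e e' : V * V) : R :=
  if e == e' then (ntri adj e + 2)%:R
  else if arrow_rel e e' && ~~ tri_rel adj e e' then -1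
  else if pm_rel e e' && ~~ tri_rel adj e e' then 1
  else 0.

Definition helmholtzian (R : pzRingType) (V : finType) (adj : rel V)
    (E : {set V * V}) : 'M[R]_#|E| :=
  \matrix_(i, j) h_entry R adj (enum_val i) (enum_val j).

Definition real_eigenvalues (R : rcfType) (n : nat) (A : 'M[R]_n) : seq R :=
  let p := char_poly A in
  sort (fun x y : R => y <= x) (flatten [seq nseq (mup x p) x | x <- rootsR p]).

(* lambda_k, 1-indexed. *)
Definition H_eigenvalue (R : rcfType) (V : finType) (adj : rel V)
    (E : {set V * V}) (k : nat) : R :=
  nth 0 (real_eigenvalues (helmholtzian R adj E)) k.-1.

Definition is_clique (V : finType) (adj : rel V) (K : {set V}) : bool :=
  [forall x in K, forall y in K, (x != y) ==> adj x y].

Definition clique_number (V : finType) (adj : rel V) : nat :=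
  \max_(K : {set V} | is_clique adj K) #|K|.

(* Main.v *)
Require Import Defs.
From HB Require Import structures.
From mathcomp Require Import all_boot all_order all_algebra.
From mathcomp Require Import polyrcf.
From mathcomp Require Import complex zify.
Set Implicit Arguments. Unset Strict Implicit. Unset Printing Implicit Defensive.
Import Order.TTheory GRing.Theory Num.Theory.
Local Open Scope ring_scope.
Local Open Scope sesquilinear_scope.


Section QF.
Variable C : numClosedFieldType.

Lemma qform_expand k (x : 'rV[C]_k) (M : 'M[C]_k) :
  (forall i j, i != j -> M i j = 0) ->
  (x *m M *m x^t*) 0 0 = \sum_i x 0 i * M i i * (x 0 i)^*.
Proof.
move=> Md; rewrite mxE; apply: eq_bigr => j _; rewrite !mxE.
rewrite (bigD1 j) //= big1 ?addr0 // => i /Md ->; by rewrite mulr0.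
Qed.

Lemma norm_expand k (x : 'rV[C]_k) :
  (x *m x^t*) 0 0 = \sum_i x 0 i * (x 0 i)^*.
Proof.
rewrite -[x in (x *m _)]mulmx1 qform_expand; last by move=> i j /negPf nij; rewrite mxE nij.
by apply: eq_bigr => i _; rewrite mxE eqxx mulr1.
Qed.

Lemma qform_ge k (x : 'rV[C]_k) (M : 'M[C]_k) (c : C) :
  (forall i j, i != j -> M i j = 0) -> (forall i, c <= M i i) ->
  c * (x *m x^t*) 0 0 <= (x *m M *m x^t*) 0 0.
Proof.
move=> Md Mc; rewrite qform_expand // norm_expand mulr_sumr -subr_ge0 -sumrB.
apply: sumr_ge0 => i _.
rewrite [c * _]mulrC -mulrA [M i i * _]mulrC mulrA -mulrBr.
by rewrite mulr_ge0 ?mul_conjC_ge0 // subr_ge0.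
Qed.

Lemma qform_lt k (x : 'rV[C]_k) (M : 'M[C]_k) (c : C) :
  (forall i j, i != j -> M i j = 0) -> (forall i, M i i < c) -> x != 0 ->
  (x *m M *m x^t*) 0 0 < c * (x *m x^t*) 0 0.
Proof.
move=> Md Mc xn0; rewrite qform_expand // norm_expand mulr_sumr -subr_gt0 -sumrB.
have /existsP[i xi] : [exists i, x 0 i != 0].
  apply: contraNT xn0; rewrite negb_exists => /forallP xN.
  by apply/eqP/rowP=> j; rewrite mxE; apply/eqP; rewrite -[_ == _]negbK xN.
have tge : forall j, 0 <= c * (x 0 j * (x 0 j)^*) - x 0 j * M j j * (x 0 j)^*.
  move=> j; rewrite [c * _]mulrC -mulrA [M j j * _]mulrC mulrA -mulrBr.
  by rewrite mulr_ge0 ?mul_conjC_ge0 // subr_ge0 ltW.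
rewrite (bigD1 i) //= ltr_wpDr ?sumr_ge0 //.
rewrite [c * _]mulrC -mulrA [M i i * _]mulrC mulrA -mulrBr.
by rewrite mulr_gt0 ?mul_conjC_gt0 // subr_gt0.
Qed.
End QF.
Lemma sumn_uniq_eq (T : eqType) (s : seq T) (f : T -> nat) y : uniq s ->
  sumn [seq (x == y) * f x | x <- s]%N = ((y \in s) * f y)%N.
Proof.
elim: s => [|x s IH] //= /andP[xs us]; rewrite IH // in_cons.
have [exy|nxy] := eqVneq x y.
  by rewrite -exy (negPf xs) /= mul1n mul0n addn0.
by rewrite mul0n.
Qed.

Lemma count_real_eig (R : rcfType) n (A : 'M[R]_n) (r : 'I_n -> R) (a : pred R) :
  char_poly A = \prod_i ('X - (r i)%:P) ->
  count a (real_eigenvalues A) = count a [seq r i | i <- enum 'I_n].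
Proof.
move=> cpE; rewrite /real_eigenvalues.
set p := char_poly A; set rs := [seq r i | i <- enum 'I_n].
have pE : p = \prod_(y <- rs) ('X - y%:P).
  by rewrite /p cpE big_map big_enum.
have p0 : p != 0 by rewrite pE prodf_seq_neq0; apply/allP => y _; rewrite polyXsubC_eq0.
apply/permP; rewrite perm_sort /perm_eq; apply/allP => y _; apply/eqP.
rewrite count_flatten -map_comp.
under eq_map => x do rewrite /= count_nseq.
rewrite sumn_uniq_eq ?uniq_roots //.
have := roots_on_rootsR p0 y; rewrite in_itv /= => <-.
case: (boolP (root p y)) => ry /=; first by rewrite mul1n pE mu_prod_XsubC.
by rewrite mul0n -(mu_prod_XsubC y rs) -pE mupNroot.
Qed.

Lemma char_poly_similar (F : comNzRingType) n (Q D P : 'M[F]_n) :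
  Q *m P = 1%:M -> char_poly (Q *m D *m P) = char_poly D.
Proof.
move=> QP.
have mQP : map_mx (@polyC F) Q *m map_mx (@polyC F) P = 1%:M.
  by rewrite -map_mxM QP map_mx1.
rewrite /char_poly.
have -> : char_poly_mx (Q *m D *m P) =
    map_mx (@polyC F) Q *m char_poly_mx D *m map_mx (@polyC F) P.
  rewrite /char_poly_mx mulmxBr mulmxBl !map_mxM.
  have -> : map_mx (@polyC F) Q *m 'X%:M *m map_mx (@polyC F) P = 'X%:M.
    by rewrite mul_mx_scalar -scalemxAl mQP scalemx1.
  by [].
rewrite !det_mulmx mulrAC -det_mulmx mQP det1 mul1r //.
Qed.

Section Core.
Variable R : rcfType.
Local Notation C := (R[i]).
Local Notation toC := (real_complex R).

Lemma charpoly_spec n (A : 'M[R]_n) r (P : 'M[C]_n) : P \is unitarymx ->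
  map_mx toC A = P^t* *m diag_mx (\row_i toC (r i)) *m P ->
  char_poly A = \prod_i ('X - (r i)%:P).
Proof.
move=> Pu AE; apply: (@map_poly_inj _ _ toC).
rewrite map_char_poly AE char_poly_similar; last first.
  by rewrite -invmx_unitary // mulVmx // unitarymx_unit.
rewrite char_poly_trig ?diag_mx_is_trig // rmorph_prod; apply: eq_bigr => i _.
by rewrite !mxE eqxx mulr1n rmorphB /= map_polyX map_polyC.
Qed.
Lemma toC_real (x : R) : toC x \is Num.real.
Proof. by apply/complex_realP; exists x. Qed.

Lemma spectral_real n (A : 'M[R]_n) : A^T = A ->
  exists r : 'I_n -> R, exists P : 'M[C]_n, P \is unitarymx /\
    map_mx toC A = P^t* *m diag_mx (\row_i toC (r i)) *m P.
Proof.
move=> As.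
set Ac := map_mx toC A.
have Ah : Ac \is hermsymmx.
  apply: realsym_hermsym.
    by apply/is_hermitianmxP; rewrite expr0 scale1r map_mx_id // /Ac map_trmx As.
  by apply/mxOverP => i j; rewrite mxE toC_real.
have /hermitian_normalmx/orthomx_spectralP Ae := Ah.
have dr := hermitian_spectral_diag_real Ah.
exists (fun i => complex.Re (spectral_diag Ac 0 i)), (spectralmx Ac); split.
  exact: spectral_unitarymx.
rewrite {1}Ae invmx_unitary ?spectral_unitarymx //; congr (_ *m _ *m _).
congr diag_mx; apply/rowP => i; rewrite mxE RRe_real //.
by move/mxOverP: dr; apply.
Qed.
End Core.

Section Sub.
Variable C : numClosedFieldType.

Lemma rowsub_unitary m n k (f : 'I_k -> 'I_m) (M : 'M[C]_(m, n)) :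
  injective f -> M \is unitarymx -> rowsub f M \is unitarymx.
Proof.
move=> finj /row_unitarymxP Mu; apply/row_unitarymxP => i j.
by rewrite !row_rowsub Mu (inj_eq finj).
Qed.

Lemma sandwich_sub m k (f : 'I_k -> 'I_m) (Q : 'M[C]_m) :
  rowsub f 1%:M *m Q *m (rowsub f 1%:M)^t* = mxsub f f Q.
Proof.
apply/matrixP => i j; rewrite !mxE.
rewrite (bigD1 (f j)) //= big1 ?addr0.
  rewrite !mxE eqxx conjC1 mulr1 (bigD1 (f i)) //= big1 ?addr0.
    by rewrite !mxE eqxx mul1r.
  by move=> l /negPf nl; rewrite !mxE eq_sym nl mul0r.
by move=> l /negPf nl; rewrite !mxE eq_sym nl conjC0 mulr0.
Qed.
End Sub.

Section Core2.
Variable R : rcfType.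
Local Notation C := (R[i]).
Local Notation toC := (real_complex R).

Lemma core_count n (A : 'M[R]_n) (r : 'I_n -> R) (P : 'M[C]_n)
    (S : {set 'I_n}) (c : R) :
  P \is unitarymx -> map_mx toC A = P^t* *m diag_mx (\row_i toC (r i)) *m P ->
  (forall i j, i \in S -> j \in S -> i != j -> A i j = 0) ->
  (forall i, i \in S -> c <= A i i) ->
  (#|S| <= #|[set i | (c <= r i)%R]|)%N.
Proof.
move=> Pu AE Aoff Adiag.
set K := [set i | (c <= r i)%R].
rewrite leqNgt; apply/negP => ltKS.
set N := ~: K.
have cardN : #|N| = (n - #|K|)%N by have := cardsC K; rewrite -/N card_ord; lia.
pose fN := fun k : 'I_#|N| => enum_val k.
pose fS := fun k : 'I_#|S| => enum_val k.
have fNinj : injective fN by move=> x y /enum_val_inj.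
have fSinj : injective fS by move=> x y /enum_val_inj.
have fNP k : fN k \in N by apply: enum_valP.
have fSP k : fS k \in S by apply: enum_valP.
set U := rowsub fN P.
set W := rowsub fS (1%:M : 'M[C]_n).
have Uu : U \is unitarymx by apply: rowsub_unitary.
have Wu : W \is unitarymx.
  by apply: rowsub_unitary => //; apply/unitarymxP; rewrite trmx1 map_mx1 mulmx1.
have rU := mxrank_unitary Uu; have rW := mxrank_unitary Wu.
have capn0 : (U :&: W)%MS != 0.
  rewrite -mxrank_eq0 -lt0n.
  have := mxrank_sum_cap U W; rewrite rU rW => e.
  have := rank_leq_col (U + W)%MS.
  have Kn : (#|K| <= n)%N by have := max_card (mem K); rewrite card_ord.
  move=> hs; lia.
set v := nz_row (U :&: W)%MS.
have vn0 : v != 0 by rewrite nz_row_eq0.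
have /submxP[a va] : (v <= U)%MS by apply: submx_trans (nz_row_sub _) (capmxSl _ _).
have /submxP[b vb] : (v <= W)%MS by apply: submx_trans (nz_row_sub _) (capmxSr _ _).
set Ac := map_mx toC A.
have sw : forall p k l (x : 'M[C]_(p, k)) (X : 'M[C]_(k, l)) (M : 'M[C]_l),
    (x *m X) *m M *m (x *m X)^t* = x *m (X *m M *m X^t*) *m x^t*.
  by move=> p k l x X M; rewrite trmx_mul map_mxM !mulmxA.
have PAP : P *m Ac *m P^t* = diag_mx (\row_i toC (r i)).
  rewrite /Ac AE !mulmxA (unitarymxP Pu) mul1mx -!mulmxA (unitarymxP Pu) mulmx1 //.
have nva : (v *m v^t*) = a *m a^t*.
  by rewrite va trmx_mul map_mxM mulmxA -(mulmxA a) (unitarymxP Uu) mulmx1.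
have nvb : (v *m v^t*) = b *m b^t*.
  by rewrite vb trmx_mul map_mxM mulmxA -(mulmxA b) (unitarymxP Wu) mulmx1.
have an0 : a != 0 by apply: contraNneq vn0 => a0; rewrite va a0 mul0mx.
have ltU : (v *m Ac *m v^t*) 0 0 < toC c * (v *m v^t*) 0 0.
  rewrite nva va (sw _ _ _ a U Ac) /U rowsubE (sw _ _ _ _ P Ac) PAP sandwich_sub.
  apply: qform_lt => // [i j nij|i].
    by rewrite !mxE (inj_eq fNinj) (negPf nij) mulr0n.
  rewrite !mxE eqxx mulr1n ltcR ltNge.
  by have := fNP i; rewrite inE /K inE.
have geW : toC c * (v *m v^t*) 0 0 <= (v *m Ac *m v^t*) 0 0.
  rewrite nvb vb (sw _ _ _ b W Ac) sandwich_sub.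
  apply: qform_ge => // [i j nij|i].
    by rewrite !mxE Aoff // ?rmorph0 // (inj_eq fSinj).
  by rewrite !mxE lecR Adiag.
by have := le_lt_trans geW ltU; rewrite ltxx.
Qed.
End Core2.

Lemma nth_sorted_count (R : realDomainType) (s : seq R) (c : R) k :
  sorted (fun x y : R => y <= x) s -> (k < count (fun x => (c <= x)%R) s)%N ->
  c <= nth 0 s k.
Proof.
elim: s k => [|x s IH] k //= srt.
have ss : sorted (fun x y : R => y <= x) s by move: srt; apply: path_sorted.
case: k => [|k] /=.
  case: (boolP (c <= x)) => // cx /= cnt.
  have /hasP[y ys cy] : has (fun x => c <= x) s by rewrite has_count.
  have tr : transitive (fun x y : R => y <= x) by move=> a b d h1 h2; exact: le_trans h2 h1.
  have := order_path_min tr srt.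
  move/allP/(_ y ys) => /= yx; by rewrite (le_trans cy yx) in cx.
move=> cnt; apply: IH => //; case: (c <= x) cnt => /=; lia.
Qed.

Lemma card_count_ord n (P : pred 'I_n) :
  #|[set i | P i]| = count P (enum 'I_n).
Proof. by rewrite cardsE cardE size_filter enumT. Qed.

Lemma eig_lower (R : rcfType) n (A : 'M[R]_n) (S : {set 'I_n}) (c : R) k :
  A^T = A ->
  (forall i j, i \in S -> j \in S -> i != j -> A i j = 0) ->
  (forall i, i \in S -> c <= A i i) ->
  (0 < k)%N -> (k <= #|S|)%N ->
  c <= nth 0 (real_eigenvalues A) k.-1.
Proof.
move=> As Aoff Adiag k0 kS.
have [r [P [Pu AE]]] := spectral_real As.
have cp := charpoly_spec Pu AE.
apply: nth_sorted_count.
  by rewrite /real_eigenvalues; apply: sort_sorted => x y; rewrite orbC le_total.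
rewrite (count_real_eig _ cp). rewrite count_map -card_count_ord.
have h := core_count Pu AE Aoff Adiag.
apply: leq_trans h; lia.
Qed.

Lemma tri_rel_sym (V : finType) (adj : rel V) (e e' : V * V) :
  tri_rel adj e e' = tri_rel adj e' e.
Proof.
by apply/existsP/existsP => -[T /and3P[a b d]]; exists T; rewrite a b d.
Qed.

Lemma h_entry_sym (R : pzRingType) (V : finType) (adj : rel V) (e e' : V * V) :
  h_entry R adj e e' = h_entry R adj e' e.
Proof.
have a : arrow_rel e e' = arrow_rel e' e by rewrite /arrow_rel orbC.
have p : pm_rel e e' = pm_rel e' e.
  by rewrite /pm_rel /Defs.head /Defs.tail (eq_sym e.2) (eq_sym e.1).
rewrite /h_entry eq_sym tri_rel_sym a p.
by case: eqP => // ->.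
Qed.

Lemma helm_sym (R : pzRingType) (V : finType) (adj : rel V) (E : {set V * V}) :
  (helmholtzian R adj E)^T = helmholtzian R adj E.
Proof. by apply/matrixP => i j; rewrite !mxE h_entry_sym. Qed.

Lemma clique_tri (V : finType) (adj : rel V) (K T : {set V}) :
  is_clique adj K -> T \subset K -> #|T| = 3%N -> is_triangle adj T.
Proof.
move=> Kc TK T3; rewrite /is_triangle T3 eqxx /=.
apply/forallP => x; apply/implyP => xT; apply/forallP => y; apply/implyP => yT.
have xK := subsetP TK x xT; have yK := subsetP TK y yT.
by move/forallP: Kc => /(_ x) /implyP /(_ xK) /forallP /(_ y) /implyP /(_ yK).
Qed.

Lemma card3 (V : finType) (a b d : V) : a != b -> b != d -> a != d ->
  #|[set a; b; d]| = 3%N.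
Proof.
by move=> ab bd ad; rewrite -setUA cardsU1 cards2 !inE bd negb_or ab ad.
Qed.

Lemma sub3 (V : finType) (x y p q s : V) :
  x \in [set p; q; s] -> y \in [set p; q; s] -> [set x; y] \subset [set p; q; s].
Proof. by move=> hx hy; rewrite !subUset !sub1set hx hy. Qed.

Lemma tri_rel_of (V : finType) (adj : rel V) (K : {set V}) (a b d : V) (e e' : V * V) :
  is_clique adj K -> a \in K -> b \in K -> d \in K ->
  a != b -> b != d -> a != d ->
  ends e \subset [set a; b; d] -> ends e' \subset [set a; b; d] -> tri_rel adj e e'.
Proof.
move=> Kc aK bK dK ab bd ad s1 s2; apply/existsP; exists [set a; b; d].
rewrite s1 s2 !andbT; apply: (clique_tri Kc); last exact: card3.
by rewrite !subUset !sub1set aK bK dK.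
Qed.

Lemma edge_facts (V : finType) (adj : rel V) (E : {set V * V}) (K : {set V}) (x y : V) :
  simple_graph adj -> orientation adj E -> (x, y) \in E -> ends (x, y) \subset K ->
  [/\ x != y, (y, x) \notin E, x \in K & y \in K].
Proof.
move=> [sym irr] [oE oX] eE eK.
have xy : adj x y := oE _ eE.
split.
- by apply: contraTneq xy => ->; rewrite (negPf (irr y)).
- by have := oX x y xy; rewrite eE addTb.
- by apply: (subsetP eK); rewrite !inE eqxx.
- by apply: (subsetP eK); rewrite !inE eqxx orbT.
Qed.

Lemma h_off (R : pzRingType) (V : finType) (adj : rel V) (E : {set V * V})
    (K : {set V}) (e e' : V * V) :
  simple_graph adj -> orientation adj E -> is_clique adj K ->
  e \in E -> e' \in E -> e != e' -> ends e \subset K -> ends e' \subset K ->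
  h_entry R adj e e' = 0.
Proof.
move=> sg oE Kc eE e'E ne eK e'K.
suff tr : arrow_rel e e' || pm_rel e e' -> tri_rel adj e e'.
  rewrite /h_entry (negPf ne).
  case: (boolP (tri_rel adj e e')) => t; first by rewrite !andbF.
  have : ~~ (arrow_rel e e' || pm_rel e e') by apply: contra t.
  by rewrite negb_or => /andP[/negPf -> /negPf ->].
case: e eE ne eK => a b eE ne eK; case: e' e'E ne e'K => a' b' e'E ne e'K.
have [ab baE aK bK] := edge_facts sg oE eE eK.
have [ab' baE' aK' bK'] := edge_facts sg oE e'E e'K.
rewrite /arrow_rel /pm_rel /Defs.head /Defs.tail /=.
move=> /orP[/orP[]|/orP[]] /eqP h.
- (* b = a' : e' = (b, b') *)
  subst a'.
  apply: (@tri_rel_of _ _ K a b b') => //.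
  + by apply: contraNneq baE' => <-.
  + by rewrite sub3 // !inE !eqxx ?orbT.
  + by rewrite sub3 // !inE !eqxx ?orbT.
- (* b' = a : e' = (a', a) *)
  subst b'.
  apply: (@tri_rel_of _ _ K a' a b) => //.
  + by apply: contraNneq baE => <-.
  + by rewrite sub3 // !inE !eqxx ?orbT.
  + by rewrite sub3 // !inE !eqxx ?orbT.
- (* b = b' : e' = (a', b) *)
  subst b'.
  apply: (@tri_rel_of _ _ K a b a') => //.
  + by rewrite eq_sym.
  + by apply: contraNneq ne => ->.
  + by rewrite sub3 // !inE !eqxx ?orbT.
  + by rewrite sub3 // !inE !eqxx ?orbT.
- (* a = a' : e' = (a, b') *)
  subst a'.
  apply: (@tri_rel_of _ _ K a b b') => //.
  + by apply: contraNneq ne => ->.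
  + by rewrite sub3 // !inE !eqxx ?orbT.
  + by rewrite sub3 // !inE !eqxx ?orbT.
Qed.

Lemma ntri_ge (V : finType) (adj : rel V) (E : {set V * V}) (K : {set V}) (e : V * V) :
  simple_graph adj -> orientation adj E -> is_clique adj K ->
  e \in E -> ends e \subset K -> (#|K| - 2 <= ntri adj e)%N.
Proof.
move=> sg oE Kc; case: e => x y eE eK.
have [xy _ xK yK] := edge_facts sg oE eE eK.
set B := ends (x, y).
have cB : #|B| = 2%N by rewrite /B /ends cards2 xy.
set D := K :\: B.
have cD : #|D| = (#|K| - 2)%N.
  by rewrite /D cardsD (setIidPr eK) cB.
rewrite -cD /ntri.
have inj : {in D &, injective (fun z => z |: B)}.
  move=> z z' zD z'D h.
  have : z \in z' |: B by rewrite -h setU11.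
  rewrite in_setU1 => /orP[/eqP //|zB].
  by move: zD; rewrite /D in_setD zB.
rewrite -(card_in_imset inj); apply: subset_leq_card.
apply/subsetP => T /imsetP[z zD ->]; rewrite inE subsetUr andbT.
move: zD; rewrite /D in_setD => /andP[zB zK].
apply: (clique_tri Kc).
  by rewrite subUset sub1set zK eK.
rewrite /B /ends /= setUA card3 //.
- by apply: contraNneq zB => ->; rewrite !inE eqxx.
- by apply: contraNneq zB => ->; rewrite !inE eqxx orbT.
Qed.

Lemma clique_adj (V : finType) (adj : rel V) (K : {set V}) x y :
  is_clique adj K -> x \in K -> y \in K -> x != y -> adj x y.
Proof.
by move=> Kc xK yK; move/forallP: Kc => /(_ x) /implyP /(_ xK) /forallP /(_ y) /implyP /(_ yK) /implyP.
Qed.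

Lemma cardS_ge (V : finType) (adj : rel V) (E : {set V * V}) (K : {set V}) :
  simple_graph adj -> orientation adj E -> is_clique adj K ->
  ('C(#|K|, 2) <= #|[set i : 'I_#|E| | ends (enum_val i) \subset K]|)%N.
Proof.
move=> sg [oE oX] Kc; rewrite -cards_draws.
set S := [set i : 'I_#|E| | _].
apply: leq_trans (leq_imset_card (fun i => ends (enum_val i)) S).
apply: subset_leq_card; apply/subsetP => B; rewrite inE => /andP[BK /cards2P[x [y [xy BE]]]].
have xK : x \in K by apply: (subsetP BK); rewrite BE !inE eqxx.
have yK : y \in K by apply: (subsetP BK); rewrite BE !inE eqxx orbT.
have axy := clique_adj Kc xK yK xy.
have := oX x y axy; case: (boolP ((x, y) \in E)) => h1 h2.
  apply/imsetP; exists (enum_rank_in h1 (x, y)); rewrite ?inE enum_rankK_in //.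
  by rewrite /ends /= -BE.
have h3 : (y, x) \in E by move: h2; rewrite addFb.
apply/imsetP; exists (enum_rank_in h3 (y, x)); rewrite ?inE enum_rankK_in //.
  by rewrite /ends /= setUC -BE.
by rewrite /ends /= setUC -BE.
Qed.

Close Scope sesquilinear_scope.
Unset Implicit Arguments.


Theorem corollary4p3 (R : rcfType) (V : finType) (adj : rel V) (E : {set V * V}) :
  simple_graph adj -> has_edge adj -> orientation adj E ->
  (forall (t : nat) (K : {set V}), (2 <= t)%N -> is_clique adj K -> #|K| = t ->
     t%:R <= H_eigenvalue R adj E 'C(t, 2)) /\
  (clique_number adj)%:R <= H_eigenvalue R adj E 'C(clique_number adj, 2).
Proof.
move=> sg [x [y axy]] oE.
have part1 : forall (t : nat) (K : {set V}), (2 <= t)%N -> is_clique adj K -> #|K| = t ->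
     t%:R <= H_eigenvalue R adj E 'C(t, 2).
  move=> t K t2 Kc cK; rewrite /H_eigenvalue.
  apply: (@eig_lower R _ _ [set i : 'I_#|E| | ends (enum_val i) \subset K]).
  - exact: helm_sym.
  - move=> i j; rewrite !inE => iK jK nij; rewrite mxE.
    apply: (h_off _ sg oE Kc) => //; try exact: enum_valP.
    by apply: contra nij => /eqP /enum_val_inj ->.
  - move=> i; rewrite inE => iK; rewrite mxE /h_entry eqxx ler_nat.
    change (t <= ntri adj (enum_val i) + 2)%N.
    have := ntri_ge sg oE Kc (enum_valP i) iK; rewrite cK; lia.
  - by rewrite bin_gt0.
  - by have := cardS_ge sg oE Kc; rewrite cK.
split => //.
have [irr_sym irr] := sg.
have ne : [pred K : {set V} | is_clique adj K] set0.
  by apply/forallP => z; rewrite inE.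
have cg : (0 < #|[pred K : {set V} | is_clique adj K]|)%N by apply/card_gt0P; exists set0.
have [K0 K0c eqK] := @eq_bigmax_cond _ [pred K : {set V} | is_clique adj K] (fun K => #|K|) cg.
have ew : clique_number adj = #|K0| by exact: eqK.
have xy : x != y by apply: contraTneq axy => ->; rewrite (negPf (irr y)).
have c2 : is_clique adj [set x; y].
  apply/forallP => u; apply/implyP; rewrite !inE => /orP[]/eqP->;
  apply/forallP => v; apply/implyP; rewrite !inE => /orP[]/eqP->;
  apply/implyP => nuv;
  first [by rewrite eqxx in nuv | done | by rewrite irr_sym].
have w2 : (2 <= clique_number adj)%N.
  have := @leq_bigmax_cond _ [pred K : {set V} | is_clique adj K] (fun K => #|K|) _ c2.
  by rewrite cards2 xy.
by apply: (part1 _ K0) => //; rewrite -ew.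
Qed.
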